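(* Let $f$ be a probability density on $\mathbb{R}$ which is a scale mixture of normals, let $G$ be an absolutely continuous cumulative distribution function on $\mathbb{R}$ symmetric about $0$, and let $\omega$ be an odd function with $\omega(x)>0$ for $x>0$. Let $\mathbf{x}=(x_1,\dots,x_n)$ be an i.i.d. sample from the density $$s_{f;G}(x;\mu,\sigma,\lambda)=\frac{2}{\sigma}f\left(\frac{x-\mu}{\sigma}\right)G\left(\lambda\,\omega\left(\frac{x-\mu}{\sigma}\right)\right),\quad x\in\mathbb{R},$$ with $\mu\in\mathbb{R}$, $\sigma>0$, $\lambda\in\mathbb{R}$, and consider the (improper) prior $\pi(\mu,\sigma,\lambda)=p(\lambda)/\sigma$ on $\mathbb{R}\times(0,\infty)\times\mathbb{R}$, where $p$ is a proper probability density on $\mathbb{R}$. Then the posterior distribution of $(\mu,\sigma,\lambda)$ is proper, i.e. $\int_{\mathbb{R}}\int_0^\infty\int_{\mathbb{R}}\prod_{j=1}^n s_{f;G}(x_j;\mu,\sigma,\lambda)\,\frac{p(\lambda)}{\sigma}\,d\mu\,d\sigma\,d\lambda<\infty$, provided $n\ge 2$ and all the observations $x_1,\dots,x_n$ are distinct.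
   Context: A density $f$ on $\mathbb{R}$ is a scale mixture of normals if $f(x)=\int_{(0,\infty)}\frac{1}{\tau}\phi\left(\frac{x}{\tau}\right)\,dH(\tau)$ for some probability distribution $H$ on $(0,\infty)$, where $\phi$ is the standard normal density (e.g. normal, logistic, Laplace, Student-$t$). *)

(* Defs.v *)
From HB Require Import structures.
From mathcomp Require Import all_boot all_order all_algebra.
From mathcomp Require Import all_classical all_reals all_analysis.
Set Implicit Arguments. Unset Strict Implicit. Unset Printing Implicit Defensive.
Import Order.TTheory GRing.Theory Num.Theory.
Import numFieldNormedType.Exports.
Local Open Scope classical_set_scope.
Local Open Scope ring_scope.

Definition std_normal_pdf {R : realType} (x : R) : R :=
  (Num.sqrt (2 * pi))^-1 * expR (- (x ^+ 2) / 2).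

Definition scale_mixture_of_normals {R : realType} (f : R -> R) : Prop :=
  exists H : probability R R,
    H `]-oo, 0%R]%classic = 0%E /\
    forall x : R,
      ((f x)%:E = \int[H]_(t in `]0%R, +oo[%classic) (t^-1 * std_normal_pdf (x / t))%:E)%E.

Definition prob_density {R : realType} (g : R -> R) : Prop :=
  measurable_fun setT g /\ (forall x, 0 <= g x) /\
  (\int[@lebesgue_measure R]_x (g x)%:E = 1)%E.

Definition abs_cont_cdf {R : realType} (G : R -> R) : Prop :=
  exists g : R -> R, prob_density g /\
    forall x : R, ((G x)%:E = \int[@lebesgue_measure R]_(t in `]-oo, x]%classic) (g t)%:E)%E.

Definition symmetric_cdf {R : realType} (G : R -> R) : Prop :=
  forall x : R, G (- x) = 1 - G x.

Definition skew_density {R : realType} (f G omega : R -> R)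
    (mu sigma lambda x : R) : R :=
  2 / sigma * f ((x - mu) / sigma) * G (lambda * omega ((x - mu) / sigma)).

(* Main.v *)
Require Import Defs.
From HB Require Import structures.
From mathcomp Require Import all_boot all_order all_algebra.
From mathcomp Require Import all_classical all_reals all_analysis.
From mathcomp Require Import ring lra measurable_realfun.
Import Order.TTheory GRing.Theory Num.Theory.
Import numFieldNormedType.Exports.
Local Open Scope classical_set_scope.
Local Open Scope ring_scope.

Section A.
Lemma le_int_nm d (T : measurableType d) (R : realType) (m : {measure set T -> \bar R})
  (A B : set T) (f g : T -> \bar R) :
  (forall x, A x -> 0 <= f x)%E -> (forall x, B x -> 0 <= g x)%E ->
  (forall x, A x -> B x /\ (f x <= g x)%E) ->
  (\int[m]_(x in A) f x <= \int[m]_(x in B) g x)%E.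
Proof.
move=> f0 g0 fg; rewrite !ge0_integralE//.
apply: ereal_sup_le => _ [h /= hf <-]; exists h => //= x.
apply: (le_trans (hf x)); rewrite /patch; case: ifPn => //.
  move=> /set_mem Ax.
  have [Bx fgx] := fg _ Ax. by rewrite mem_set.
move=> _; case: ifPn => // /set_mem; exact: g0.
Qed.

Lemma cdf_bounds (R : realType) (G : R -> R) : abs_cont_cdf G -> forall x, 0 <= G x <= 1.
Proof.
move=> [g [[mg [g0 g1]] Gx]] x.
have mge : measurable_fun setT (fun t => (g t)%:E) by apply/measurable_EFinP.
rewrite -!lee_fin Gx; apply/andP; split.
  by apply: integral_ge0 => t _; rewrite lee_fin.
rewrite -g1; apply: ge0_subset_integral => //.
by move=> t _; rewrite lee_fin.
Qed.

Lemma mix_mono (R : realType) (f : R -> R) : scale_mixture_of_normals f ->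
  forall r u : R, 0 <= r -> r <= `|u| -> f u <= f r.
Proof.
move=> [H [_ Hf]] r u r0 ru.
rewrite -lee_fin !Hf; apply: le_int_nm.
- move=> t /=; rewrite in_itv /= andbT => t0; rewrite lee_fin.
  apply: mulr_ge0; first by rewrite invr_ge0 ltW.
  by apply: mulr_ge0; [rewrite invr_ge0 sqrtr_ge0|exact: expR_ge0].
- move=> t /=; rewrite in_itv /= andbT => t0; rewrite lee_fin.
  apply: mulr_ge0; first by rewrite invr_ge0 ltW.
  by apply: mulr_ge0; [rewrite invr_ge0 sqrtr_ge0|exact: expR_ge0].
move=> t /= tpos; split => //; move: tpos; rewrite in_itv /= andbT => t0.
rewrite lee_fin; apply: ler_wpM2l; first by rewrite invr_ge0 ltW.
rewrite /std_normal_pdf; apply: ler_wpM2l; first by rewrite invr_ge0 sqrtr_ge0.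
rewrite ler_expR; rewrite !mulNr lerN2; apply: ler_wpM2r; first by rewrite invr_ge0.
have -> : (u / t) ^+ 2 = (`|u| / t) ^+ 2.
  by rewrite -(real_normK (num_real (u / t))) normrM (@ger0_norm _ t^-1) // invr_ge0 ltW.
have h1 : 0 <= r / t by rewrite divr_ge0 // ltW.
have h2 : r / t <= `|u| / t by rewrite ler_pM2r // invr_gt0.
move: h1 h2; set v := r / t; set w := `|u| / t => h1 h2.
rewrite !expr2; nra.
Qed.

Lemma rf_le1 (R : realType) (f : R -> R) : prob_density f ->
  (forall r u : R, 0 <= r -> r <= `|u| -> f u <= f r) ->
  forall r, 0 <= r -> r * f r <= 1.
Proof.
move=> [mf [f0 f1]] mono r r0.
rewrite -lee_fin -f1.
have -> : (r * f r)%:E = (\int[@lebesgue_measure R]_(x in `[0%R, r%R]) (cst (f r)%:E) x)%E.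
  rewrite integral_cst //= lebesgue_measure_itv /= lte_fin.
  case: ltP => [_|rr].
    by rewrite oppr0 adde0 -EFinM mulrC.
  have -> : r = 0 by apply/le_anti; rewrite rr r0.
  by rewrite mul0r mule0.
apply: le_int_nm => //.
- by move=> *; rewrite lee_fin.
- by move=> *; rewrite lee_fin.
move=> t /=; rewrite in_itv /= => /andP[t0 tr]; split => //.
by rewrite lee_fin mono // ger0_norm.
Qed.

End A.

Section B.
Local Open Scope ereal_scope.
Lemma int_affine (R : realType) (F : R -> R) (c s : R) : (0 < s)%R ->
  measurable_fun setT F -> (forall u, 0 <= F u)%R ->
  \int[@lebesgue_measure R]_m (F ((c - m) / s))%:E =
  s%:E * \int[@lebesgue_measure R]_u (F u)%:E.
Proof.
move=> s0 mF F0.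
pose phi : measurableTypeR R -> measurableTypeR R := fun m : R => ((c - m) / s)%R.
have mphi : measurable_fun setT phi.
  have h1 : measurable_fun setT (fun m : R => c - m)%R.
    exact: (@measurable_realfun.measurable_funB _ _ _ _ (fun _ => c) id).
  exact: (measurable_realfun.measurable_funM h1 (measurable_cst s^-1%R)).
pose P := measure_function_pushforward__canonical__measure_function_Measure
  (@lebesgue_measure R) mphi.
have ks : (0 <= s^-1)%R by rewrite invr_ge0 ltW.
pose nu := measure_function_mscale__canonical__measure_function_Measure (NngNum ks) P.
have eqm : forall A, measurable A -> (@lebesgue_measure R) A = nu A.
  move=> A mA; apply: (@lebesgue_measure_unique R nu) => // _ [[a b]] _ <-.
  change ((@lebesgue_measure R) `]a, b]%classic = (s^-1)%R%:E * (@lebesgue_measure R) (phi @^-1` `]a, b]%classic)).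
  have -> : phi @^-1` `]a, b]%classic = `[(c - s * b)%R, (c - s * a)%R[%classic.
    apply/seteqP; split => y /=; rewrite !in_itv /= /phi.
      move=> /andP[ay yb]; move: ay yb.
      rewrite ltr_pdivlMr // ler_pdivrMr // => ay yb.
      by apply/andP; split; lra.
    move=> /andP[ay yb].
    rewrite ltr_pdivlMr // ler_pdivrMr //.
    by apply/andP; split; lra.
  rewrite !lebesgue_measure_itv /= !lte_fin.
  have -> : ((c - s * b) < (c - s * a))%R = (a < b)%R.
    by rewrite ltrD2l ltrN2 ltr_pM2l.
  case: ifPn => ab; last by rewrite mule0.
  rewrite -!EFinD -EFinM; congr (_%:E).
  by field; rewrite gt_eqF.
have E1 : \int[@lebesgue_measure R]_u (F u)%:E = \int[nu]_u (F u)%:E.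
  by apply: eq_measure_integral => A mA _; exact: eqm.
have mFe : measurable_fun setT (fun u => (F u)%:E) by apply/measurable_EFinP.
have E2 : \int[nu]_u (F u)%:E = (s^-1)%R%:E * \int[P]_u (F u)%:E.
  by rewrite ge0_integral_mscale // => x _; rewrite lee_fin.
have E3 : \int[P]_u (F u)%:E = \int[@lebesgue_measure R]_m (F (phi m))%:E.
  by rewrite ge0_integral_pushforward // => y _; rewrite lee_fin.
have E := etrans E1 (etrans E2 (congr1 (fun z => (s^-1)%R%:E * z) E3)).
rewrite [in RHS]E muleA -EFinM mulfV ?gt_eqF // mul1e.
by [].
Qed.

End B.

Section C.
Local Open Scope ereal_scope.
Lemma term_le_series (R : realType) (u : (\bar R)^nat) k :
  (forall n, 0 <= u n) -> u k <= \sum_(n <oo) u n.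
Proof.
move=> u0; apply: le_trans (nneseries_lim_ge k.+1 _) => //.
rewrite big_nat_recr //= leeDr //; exact: sume_ge0.
Qed.

Lemma telescope_inv (R : realType) :
  \sum_(k <oo) ((- (k.+2%:R : R)^-1)%:E - (- (k.+1%:R : R)^-1)%:E) = 1.
Proof.
pose g := fun k : nat => (- (k.+1%:R : R)^-1)%R.
have cg : g @ \oo --> 0%R.
  rewrite -oppr0; apply: cvgN; exact: cvg_harmonic.
have := @nondecreasing_telescope_sumey R 0 g.
rewrite EFin_lim; last by apply/cvg_ex; exists 0%R.
rewrite (cvg_lim _ cg) //= => ->.
- by rewrite add0e /g opprK invr1.
- by [].
move=> m n mn; by rewrite /g lerN2 lef_pV2 ?posrE ?ltr0n // ler_nat ltnS.
Qed.

Lemma trivIset_unit (R : realType) :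
  trivIset setT (fun k : nat => `[(k%:R : R), k.+1%:R[%classic).
Proof.
move=> i j _ _ [x [/= + +]]; rewrite !in_itv /= => /andP[ix xi] /andP[jx xj].
apply/eqP; rewrite eqn_leq; apply/andP; split.
- rewrite -ltnS -(ltr_nat R); exact: (le_lt_trans ix xj).
- rewrite -ltnS -(ltr_nat R); exact: (le_lt_trans jx xi).
Qed.

End C.

Section D.
Local Open Scope ring_scope.
Lemma A1 (R : realType) (a c F K : R) : 0 < a -> 0 <= c -> 0 <= F -> 1 <= K ->
  c * (((K + 1) / a) ^+ 2 * F) * (a / K - a / (K + 1)) <= c * (2 / a) * F.
Proof.
move=> a0 c0 F0 K1.
have K0 : 0 < K by apply: lt_le_trans K1.
have K10 : 0 < K + 1 by apply: addr_gt0.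
rewrite -subr_ge0.
have -> : c * (2 / a) * F - c * (((K + 1) / a) ^+ 2 * F) * (a / K - a / (K + 1))
   = c * F * ((K - 1) / (a * K)).
  by field; rewrite ?gt_eqF ?mulr_gt0.
apply: mulr_ge0; first exact: mulr_ge0.
by apply: divr_ge0; [rewrite subr_ge0|rewrite ltW // mulr_gt0].
Qed.

Lemma A2 (R : realType) (a c M K : R) : 0 < a -> 0 <= c -> 0 <= M -> 1 <= K ->
  c * (M / (a * K) ^+ 2) * a <= c * (2 * M / a) * (- (K + 1)^-1 - - K^-1).
Proof.
move=> a0 c0 M0 K1.
have K0 : 0 < K by apply: lt_le_trans K1.
have K10 : 0 < K + 1 by apply: addr_gt0.
rewrite -subr_ge0.
have -> : c * (2 * M / a) * (- (K + 1)^-1 - - K^-1) - c * (M / (a * K) ^+ 2) * a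
   = c * M * ((K - 1) / (a * K ^+ 2 * (K + 1))).
  by field; rewrite ?gt_eqF ?mulr_gt0 ?exprn_gt0.
apply: mulr_ge0; first exact: mulr_ge0.
by apply: divr_ge0; [rewrite subr_ge0|rewrite ltW // !mulr_gt0 // exprn_gt0].
Qed.

End D.

Section E.
Lemma sep (R : realType) (n : nat) (x : 'I_n -> R) : injective x ->
  exists a : R, 0 < a /\ forall i j, i != j -> 2 * a <= `|x i - x j|.
Proof.
move=> inj.
pose m := \big[Order.min/1]_(ij : 'I_n * 'I_n | ij.1 != ij.2) `|x ij.1 - x ij.2|.
have m0 : 0 < m.
  apply: lt_bigmin => // ij ij12; rewrite normr_gt0 subr_eq0.
  by apply: contra ij12 => /eqP /inj ->.
exists (m / 2); split; first by rewrite divr_gt0.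
move=> i j ij; rewrite mulrC divfK ?pnatr_eq0 //.
exact: (@bigmin_le_cond _ _ _ _ (i, j) (fun ij : 'I_n * 'I_n => ij.1 != ij.2) (fun ij => `|x ij.1 - x ij.2|)).
Qed.

Lemma prod_bound (R : realType) (n : nat) (x : 'I_n -> R) (f : R -> R) (a s mu : R) :
  (0 < n)%N -> 0 < a -> 0 < s -> (forall i j, i != j -> 2 * a <= `|x i - x j|) ->
  (forall u, 0 <= f u) -> (forall r u : R, 0 <= r -> r <= `|u| -> f u <= f r) ->
  \prod_(j < n) f ((x j - mu) / s) <= f (a / s) ^+ n.-1 * \sum_(k < n) f ((x k - mu) / s).
Proof.
move=> n0 a0 s0 hx f0 mono.
have [k Hk] : exists k : 'I_n, forall j, j != k -> a <= `|x j - mu|.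
  case: (pselect (exists k, `|x k - mu| < a)) => [[k hk]|nk].
  - exists k => j jk; rewrite leNgt; apply/negP => hj.
    have := hx j k jk.
    have : `|x j - x k| <= `|x j - mu| + `|x k - mu|.
      by rewrite (distrC (x k)); apply: ler_distD.
    lra.
  - exists (Ordinal n0) => j _; rewrite leNgt; apply/negP => hj; apply: nk; by exists j.
rewrite (bigD1 k) //= mulrC.
apply: ler_pM.
- by apply: prodr_ge0 => *; exact: f0.
- exact: f0.
- have -> : f (a / s) ^+ n.-1 = \prod_(j < n | j != k) f (a / s).
    by rewrite prodr_const cardC1 card_ord.
  apply: ler_prod => j jk; apply/andP; split; first exact: f0.
  apply: mono; first by rewrite divr_ge0 // ltW.
  rewrite normrM (@ger0_norm _ s^-1); last by rewrite invr_ge0 ltW.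
  by rewrite ler_pM2r ?invr_gt0 // Hk.
- rewrite (bigD1 k) //= lerDl; apply: sumr_ge0 => *; exact: f0.
Qed.

End E.

Section F.
Lemma alg (R : realType) (a s F P : R) (m : nat) : 0 < a -> 0 < s -> 0 <= F -> 0 <= P ->
  (a / s) * F <= 1 ->
  (2 / s) ^+ m.+2 * F ^+ m.+1 * (P / s) * (m.+2%:R * s)
    <= P * (2 ^+ m.+2 * m.+2%:R * (a^-1) ^+ m) * (s ^- 2 * F).
Proof.
move=> a0 s0 F0 P0 h.
have e1 : (2 / s) ^+ m.+2 * F ^+ m.+1 * (P / s) * (m.+2%:R * s)
    = (P * 2 ^+ m.+2 * m.+2%:R * (s ^- 2 * F)) * (F / s) ^+ m.
  rewrite !exprMn !exprS !exprVn; field.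
  by rewrite expf_neq0 ?gt_eqF.
have e2 : P * (2 ^+ m.+2 * m.+2%:R * (a^-1) ^+ m) * (s ^- 2 * F)
    = (P * 2 ^+ m.+2 * m.+2%:R * (s ^- 2 * F)) * (a^-1) ^+ m.
  by rewrite !mulrA; ring.
rewrite e1 e2; apply: ler_wpM2l.
  apply: mulr_ge0; last by apply: mulr_ge0 => //; rewrite -exprVn exprn_ge0 // invr_ge0 ltW.
  by apply: mulr_ge0 => //; apply: mulr_ge0 => //; exact: exprn_ge0.
apply: lerXn2r.
- by rewrite nnegrE divr_ge0 // ltW.
- by rewrite nnegrE invr_ge0 ltW.
rewrite -(ler_pM2l a0) mulfV ?gt_eqF //.
have -> : a * (F / s) = a / s * F by ring.
exact: h.
Qed.

End F.

Section G.

Lemma cover1 (R : realType) (x : R) : 1 <= x -> exists k : nat, k.+1%:R <= x < k.+2%:R.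
Proof.
move=> x1; have x0 : 0 <= x by apply: le_trans x1.
have := truncn_itv x0; have : (0 < Num.truncn x)%N by rewrite truncn_gt0.
case: (Num.truncn x) => // m _ h; by exists m.
Qed.

Local Open Scope ereal_scope.

Lemma Kbound (R : realType) (f : R -> R) (a c : R) :
  prob_density f -> (forall r u : R, 0 <= r -> r <= `|u| -> f u <= f r)%R ->
  (0 < a)%R -> (0 <= c)%R ->
  \int[@lebesgue_measure R]_(s in `]0%R, +oo[) (c * (s ^- 2 * f (a / s)))%:E
     <= (c * (2 / a) + c * (2 * f 0 / a))%:E.
Proof.
move=> [mf [f0 f1]] mono a0 c0.
set M := f 0%R.
have M0 : (0 <= M)%R by exact: f0.
pose I k := `]((a / k.+2%:R)%R), ((a / k.+1%:R)%R)]%classic : set R.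
pose J k := `[((a * k.+1%:R)%R), ((a * k.+2%:R)%R)[%classic : set R.
pose d k := (c * ((k.+2%:R / a) ^+ 2 * f k.+1%:R))%R.
pose e k := (c * (M / (a * k.+1%:R) ^+ 2))%R.
pose u1 k s := (d k * \1_(I k) s)%:E.
pose u2 k s := (e k * \1_(J k) s)%:E.
have d0 k : (0 <= d k)%R by apply: mulr_ge0 => //; apply: mulr_ge0 => //; exact: sqr_ge0.
have e0 k : (0 <= e k)%R.
  by apply: mulr_ge0 => //; apply: divr_ge0 => //; exact: sqr_ge0.
have u10 k s : 0 <= u1 k s by rewrite lee_fin mulr_ge0.
have u20 k s : 0 <= u2 k s by rewrite lee_fin mulr_ge0.
have mu1 k : measurable_fun setT (u1 k).
  apply/measurable_EFinP; apply: measurable_funM => //.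
  by apply: measurable_indic; exact: measurable_itv.
have mu2 k : measurable_fun setT (u2 k).
  apply/measurable_EFinP; apply: measurable_funM => //.
  by apply: measurable_indic; exact: measurable_itv.

have Hpt : forall s : R, (0 < s)%R ->
    (c * (s ^- 2 * f (a / s)))%:E <= \sum_(k <oo) u1 k s + \sum_(k <oo) u2 k s.
  move=> s s0.
  have sinv0 : (0 <= s^-1)%R by rewrite invr_ge0 ltW.
  have fas0 : (0 <= f (a / s))%R by exact: f0.
  have sq : (s ^- 2 = (s^-1) ^+ 2)%R by rewrite exprVn.
  case: (ltP s a) => [sa|saa].
  - have [k /andP[k1 k2]] : exists k : nat, (k.+1%:R <= a / s < k.+2%:R)%R.
      apply: cover1; rewrite ler_pdivlMr // mul1r ltW //.
    have sI : I k s.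
      rewrite /I /= in_itv /=; apply/andP; split.
        by rewrite ltr_pdivrMr // mulrC -ltr_pdivrMr.
      by rewrite ler_pdivlMr // mulrC -ler_pdivlMr.
    apply: (@le_trans _ _ (u1 k s)); last first.
      apply: (le_trans (@term_le_series R (fun n => u1 n s) k (fun n => u10 n s))).
      by rewrite leeDl // nneseries_ge0.
    rewrite /u1 indicE mem_set // mulr1 lee_fin /d.
    apply: ler_wpM2l => //; apply: ler_pM => //.
    - by rewrite sq exprn_ge0.
    - have hs : (s^-1 <= k.+2%:R / a)%R by rewrite ler_pdivlMr // mulrC ltW.
      by rewrite sq; apply: ler_pM.
    - by apply: mono => //; rewrite ger0_norm // divr_ge0 // ltW.
  - have [k /andP[k1 k2]] : exists k : nat, (k.+1%:R <= s / a < k.+2%:R)%R.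
      by apply: cover1; rewrite ler_pdivlMr // mul1r.
    have sJ : J k s.
      rewrite /J /= in_itv /=; apply/andP; split.
        by rewrite mulrC -ler_pdivlMr.
      by rewrite mulrC -ltr_pdivrMr.
    apply: (@le_trans _ _ (u2 k s)); last first.
      apply: (le_trans (@term_le_series R (fun n => u2 n s) k (fun n => u20 n s))).
      by rewrite leeDr // nneseries_ge0.
    rewrite /u2 indicE mem_set // mulr1 lee_fin /e.
    apply: ler_wpM2l => //; rewrite mulrC; apply: ler_pM => //.
    - by rewrite sq exprn_ge0.
    - by apply: mono => //; exact: normr_ge0.
    - have aK0 : (0 < a * k.+1%:R)%R by rewrite mulr_gt0.
      have aKs : (a * k.+1%:R <= s)%R by rewrite mulrC -ler_pdivlMr.
      rewrite sq -exprVn; apply: ler_pM => //; try exact: ltW.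
      by rewrite lef_pV2 ?posrE.
      by rewrite lef_pV2 ?posrE.
apply: (@le_trans _ _ (\int[@lebesgue_measure R]_s (\sum_(k <oo) u1 k s + \sum_(k <oo) u2 k s))).
  apply: le_int_nm.
  - move=> s /=; rewrite in_itv /= andbT => s0; rewrite lee_fin.
    apply: mulr_ge0 => //; apply: mulr_ge0; [by rewrite -exprVn exprn_ge0 // invr_ge0 ltW|exact: f0].
  - by move=> s _; rewrite adde_ge0 // nneseries_ge0.
  - move=> s /=; rewrite in_itv /= andbT => s0; split => //; exact: Hpt.

have ms1 : measurable_fun setT (fun s => \sum_(k <oo) u1 k s).
  by apply: ge0_emeasurable_sum => // k x _ _.
have ms2 : measurable_fun setT (fun s => \sum_(k <oo) u2 k s).
  by apply: ge0_emeasurable_sum => // k x _ _.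
rewrite ge0_integralD //; try by move=> x _; exact: nneseries_ge0.
rewrite !integral_nneseries //.

have Hu1 k : \int[@lebesgue_measure R]_x u1 k x = (d k * (a / k.+1%:R - a / k.+2%:R))%:E.
  rewrite /u1; under eq_integral do rewrite EFinM.
  rewrite ge0_integralZl_EFin //; last first.
    by apply/measurable_EFinP; apply: measurable_indic; exact: measurable_itv.
  rewrite integral_indic //; last exact: measurable_itv.
  rewrite setIT /I /= lebesgue_measure_itv /= lte_fin ifT.
    by rewrite -EFinD -EFinM.
  by rewrite ltr_pM2l // ltf_pV2 ?posrE ?ltr0n // ltr_nat.
have Hu2 k : \int[@lebesgue_measure R]_x u2 k x = (e k * a)%:E.
  rewrite /u2; under eq_integral do rewrite EFinM.
  rewrite ge0_integralZl_EFin //; last first.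
    by apply/measurable_EFinP; apply: measurable_indic; exact: measurable_itv.
  rewrite integral_indic //; last exact: measurable_itv.
  rewrite setIT /J /= lebesgue_measure_itv /= lte_fin ifT.
    by rewrite -EFinD -EFinM -mulrBr -natrB // subSnn mulr1.
  by rewrite ltr_pM2l // ltr_nat.

rewrite (eq_eseriesr (fun k _ => Hu1 k)) (eq_eseriesr (fun k _ => Hu2 k)).
pose U k := `[(k%:R : R), k.+1%:R[%classic.
have HU k : (f k.+1%:R)%:E <= \int[@lebesgue_measure R]_(x in U k) (f x)%:E.
  have -> : (f k.+1%:R)%:E = \int[@lebesgue_measure R]_(x in U k) (cst (f k.+1%:R)%:E) x.
    rewrite integral_cst; last exact: measurable_itv.
    rewrite /U /= lebesgue_measure_itv /= lte_fin ltr_nat ltnSn.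
    by rewrite -EFinD -natrB // subSnn mule1.
  apply: le_int_nm.
  - by move=> *; rewrite lee_fin.
  - by move=> *; rewrite lee_fin.
  move=> t Ut; split => //; move: Ut; rewrite /U /= in_itv /= => /andP[t0 t1].
  rewrite lee_fin mono //; first by apply: le_trans t0.
  by rewrite ger0_norm ?ltW //; apply: le_trans t0.
have S1 : \sum_(k <oo) (d k * (a / k.+1%:R - a / k.+2%:R))%:E <= (c * (2 / a))%:E.
  apply: (@le_trans _ _ (\sum_(k <oo) ((c * (2 / a))%:E * \int[@lebesgue_measure R]_(x in U k) (f x)%:E))).
    apply: lee_nneseries.
      move=> k _ _; rewrite lee_fin; apply: mulr_ge0 => //.
      by rewrite subr_ge0 ler_pM2l // lef_pV2 ?posrE ?ltr0n // ler_nat.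
    move=> k _; apply: (@le_trans _ _ ((c * (2 / a))%:E * (f k.+1%:R)%:E)); last first.
      by apply: lee_wpmul2l => //; rewrite lee_fin mulr_ge0 // divr_ge0 // ltW.
    rewrite -EFinM lee_fin /d.
    have e2 : (k.+2%:R = k.+1%:R + 1 :> R)%R by rewrite natr1.
    rewrite e2; apply: A1 => //.
    by rewrite ler1n.
  rewrite nneseriesZl; last by move=> k _; apply: integral_ge0 => x _; rewrite lee_fin.
  rewrite -{2}(mule1 (c * (2 / a))%:E); apply: lee_wpmul2l.
    by rewrite lee_fin mulr_ge0 // divr_ge0 // ltW.
  have mU k : measurable (U k) by exact: measurable_itv.
  have mfU : measurable_fun (\bigcup_k U k) (fun x => (f x)%:E).
    by apply/measurable_EFinP; exact: measurable_funTS.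
  have fU0 : forall x, (\bigcup_k U k) x -> 0 <= (f x)%:E by move=> x _; rewrite lee_fin.
  rewrite -(@ge0_integral_bigcup _ _ R (@lebesgue_measure R) U (fun x => (f x)%:E) mU mfU fU0 (@trivIset_unit R)).
  rewrite -f1; apply: le_int_nm.
  - by move=> *; rewrite lee_fin.
  - by move=> *; rewrite lee_fin.
  by move=> x _; split.
have S2 : \sum_(k <oo) (e k * a)%:E <= (c * (2 * M / a))%:E.
  apply: (@le_trans _ _ (\sum_(k <oo) ((c * (2 * M / a))%:E * ((- (k.+2%:R : R)^-1)%:E - (- (k.+1%:R : R)^-1)%:E)))).
    apply: lee_nneseries.
      by move=> k _ _; rewrite lee_fin; apply: mulr_ge0 => //; exact: ltW.
    move=> k _; rewrite -EFinB -EFinM lee_fin /e.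
    have e2 : (k.+2%:R = k.+1%:R + 1 :> R)%R by rewrite natr1.
    rewrite e2; apply: A2 => //.
    by rewrite ler1n.
  rewrite nneseriesZl; last first.
    move=> k _; rewrite -EFinB lee_fin subr_ge0 lerN2 lef_pV2 ?posrE ?ltr0n //.
    by rewrite ler_nat.
  by rewrite telescope_inv mule1.
by rewrite EFinD; apply: leeD.
Qed.

End G.

Local Open Scope ring_scope.

Theorem theorem2 (R : realType) (f G omega p : R -> R) (n : nat) (x : 'I_n -> R) :
  scale_mixture_of_normals f ->
  prob_density f ->
  abs_cont_cdf G -> symmetric_cdf G ->
  measurable_fun setT omega ->
  (forall y : R, omega (- y) = - omega y) ->
  (forall y : R, 0 < y -> 0 < omega y) ->
  prob_density p ->
  (2 <= n)%N ->
  injective x ->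
  (\int[@lebesgue_measure R]_lambda
     \int[@lebesgue_measure R]_(sigma in `]0%R, +oo[%classic)
       \int[@lebesgue_measure R]_mu
         ((\prod_(j < n) skew_density f G omega mu sigma lambda (x j))
            * (p lambda / sigma))%:E < +oo)%E.
Proof.
move=> Hmix Hf HG _ _ _ _ Hp n2 inj.
have mono := @mix_mono _ _ Hmix.
have Gb := @cdf_bounds _ _ HG.
have rf := @rf_le1 _ _ Hf mono.
have [mf [f0 f1]] := Hf.
have [mp [p0 p1]] := Hp.
have [a [a0 ha]] := @sep _ _ _ inj.
have n0 : (0 < n)%N by apply: leq_trans n2.
move: n x inj n2 ha n0 => [|[|m]] // x inj _ ha n0.
set c0 := (2 ^+ m.+2 * m.+2%:R * (a^-1) ^+ m)%R.
have c00 : (0 <= c0)%R.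
  by rewrite mulr_ge0 // ?mulr_ge0 // exprn_ge0 // invr_ge0 ltW.
set K := (c0 * (2 / a) + c0 * (2 * f 0 / a))%R.
have K0 : (0 <= K)%R.
  by rewrite addr_ge0 // mulr_ge0 // ?divr_ge0 // ?mulr_ge0 // ltW.
have skew0 : forall mu s l j, (0 < s)%R -> (0 <= skew_density f G omega mu s l (x j))%R.
  move=> mu s l j s0; rewrite /skew_density.
  apply: mulr_ge0; last by case/andP: (Gb (l * omega ((x j - mu) / s))).
  by apply: mulr_ge0 => //; rewrite divr_ge0 // ltW.
have Hmu : forall l s, (0 < s)%R ->
  (\int[@lebesgue_measure R]_mu
     ((\prod_(j < m.+2) skew_density f G omega mu s l (x j)) * (p l / s))%:E
  <= (p l * c0 * (s ^- 2 * f (a / s)))%:E)%E.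
  move=> l s s0.
  set B := ((2 / s) ^+ m.+2 * f (a / s) ^+ m.+1 * (p l / s))%R.
  have ps0 : (0 <= p l / s)%R by rewrite divr_ge0 // ltW.
  have B0 : (0 <= B)%R.
    by rewrite /B; apply: mulr_ge0 => //; apply: mulr_ge0; apply: exprn_ge0 => //; rewrite divr_ge0 // ltW.
  have sum0 : forall mu, (0 <= \sum_(k < m.+2) f ((x k - mu) / s))%R.
    by move=> mu; apply: sumr_ge0 => *; exact: f0.
  apply: (@le_trans _ _ (\int[@lebesgue_measure R]_mu (B * \sum_(k < m.+2) f ((x k - mu) / s))%:E)%E).
    apply: le_int_nm.
    - move=> mu _; rewrite lee_fin; apply: mulr_ge0 => //.
      by apply: prodr_ge0 => j _; exact: skew0.
    - by move=> mu _; rewrite lee_fin mulr_ge0.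
    move=> mu _; split => //; rewrite lee_fin.
    apply: (@le_trans _ _ (((2 / s) ^+ m.+2 * \prod_(j < m.+2) f ((x j - mu) / s)) * (p l / s))).
      apply: ler_wpM2r => //.
      have -> : ((2 / s) ^+ m.+2 = \prod_(j < m.+2) (2 / s))%R by rewrite prodr_const card_ord.
      rewrite -big_split /=; apply: ler_prod => j _; apply/andP; split; first exact: skew0.
      rewrite /skew_density; apply: ler_piMr; first by apply: mulr_ge0 => //; rewrite divr_ge0 // ltW.
      by case/andP: (Gb (l * omega ((x j - mu) / s))).
    have hp := @prod_bound _ _ x f a s mu n0 a0 s0 ha f0 mono.
    apply: (@le_trans _ _ ((2 / s) ^+ m.+2 * (f (a / s) ^+ m.+1 * \sum_(k < m.+2) f ((x k - mu) / s)) * (p l / s))).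
      apply: ler_wpM2r => //; apply: ler_wpM2l => //; first by rewrite exprn_ge0 // divr_ge0 // ltW.
    by rewrite /B le_eqVlt; apply/orP; left; apply/eqP; ring.
  have mfc : forall k : 'I_m.+2, measurable_fun setT (fun mu : R => f ((x k - mu) / s)).
    move=> k; apply: measurableT_comp => //.
    have h1 : measurable_fun setT (fun m : R => x k - m)%R.
      exact: (@measurable_realfun.measurable_funB _ _ _ _ (fun _ => x k) id).
    exact: (measurable_realfun.measurable_funM h1 (measurable_cst s^-1%R)).
  under eq_integral do rewrite EFinM.
  rewrite ge0_integralZl_EFin //; last first.
    apply/measurable_EFinP.
    by apply: measurable_sum => k; exact: mfc.
    by move=> mu _; rewrite lee_fin.
  under eq_integral do rewrite -sumEFin.
  rewrite ge0_integral_sum //; last 2 first.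
    by move=> k; apply/measurable_EFinP; exact: mfc.
    by move=> k mu _; rewrite lee_fin.
  under eq_bigr do rewrite int_affine // f1 mule1.
  rewrite sumEFin sumr_const card_ord -EFinM lee_fin -mulr_natl.
  apply: alg => //.
  by apply: rf; rewrite divr_ge0 // ltW.
have Hsig : forall l,
  (\int[@lebesgue_measure R]_(s in `]0%R, +oo[%classic)
     \int[@lebesgue_measure R]_mu
       ((\prod_(j < m.+2) skew_density f G omega mu s l (x j)) * (p l / s))%:E
  <= (p l * K)%:E)%E.
  move=> l.
  have pc0 : (0 <= p l * c0)%R by rewrite mulr_ge0.
  apply: (@le_trans _ _ (\int[@lebesgue_measure R]_(s in `]0%R, +oo[%classic)
            (p l * c0 * (s ^- 2 * f (a / s)))%:E)%E).
    apply: le_int_nm.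
    - move=> s /=; rewrite in_itv /= andbT => s0; apply: integral_ge0 => mu _.
      rewrite lee_fin; apply: mulr_ge0; first by apply: prodr_ge0 => j _; exact: skew0.
      by rewrite divr_ge0 // ltW.
    - move=> s /=; rewrite in_itv /= andbT => s0; rewrite lee_fin.
      apply: mulr_ge0 => //; apply: mulr_ge0 => //.
      by rewrite -exprVn exprn_ge0 // invr_ge0 ltW.
    move=> s /= hs; split => //; move: hs; rewrite in_itv /= andbT => s0.
    exact: Hmu.
  apply: le_trans (@Kbound _ _ _ _ Hf mono a0 pc0) _.
  by rewrite lee_fin /K le_eqVlt; apply/orP; left; apply/eqP; ring.
apply: (@le_lt_trans _ _ (\int[@lebesgue_measure R]_l (p l * K)%:E)%E).
  apply: le_int_nm.
  - move=> l _; apply: integral_ge0 => s /=; rewrite in_itv /= andbT => s0.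
    apply: integral_ge0 => mu _.
    rewrite lee_fin; apply: mulr_ge0; first by apply: prodr_ge0 => j _; exact: skew0.
    by rewrite divr_ge0 // ltW.
  - by move=> l _; rewrite lee_fin mulr_ge0.
  by move=> l _; split => //; exact: Hsig.
under eq_integral do rewrite mulrC EFinM.
rewrite ge0_integralZl_EFin //; last first.
  by apply/measurable_EFinP.
  by move=> l _; rewrite lee_fin.
by rewrite p1 mule1 ltry.
Qed.
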